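(* Let $f:\mathbb{N}^d\to\mathbb{N}$ be obliviously-computable by a leaderless CRN. Then $f$ is superadditive: $f(\vec{x})+f(\vec{y})\le f(\vec{x}+\vec{y})$ for all $\vec{x},\vec{y}\in\mathbb{N}^d$.
   Context: A chemical reaction network (CRN) is a pair $(\mathcal{S},\mathcal{R})$ of a finite set of species and a finite set of reactions $(\vec{R},\vec{P})\in\mathbb{N}^{\mathcal{S}}\times\mathbb{N}^{\mathcal{S}}$. A configuration is $\vec{C}\in\mathbb{N}^{\mathcal{S}}$; a reaction is applicable if $\vec{R}\le\vec{C}$ and yields $\vec{C}-\vec{R}+\vec{P}$; reachability is via finite sequences of applicable reactions. A leaderless CRN computing $f:\mathbb{N}^d\to\mathbb{N}$ has input species $X_1,\ldots,X_d$ and output species $Y$; the initial configuration $\vec{I}_{\vec{x}}$ has $\vec{x}(i)$ copies of $X_i$ and zero of all other species. $\vec{C}$ is stable if all configurations reachable from it have the same count of $Y$. The CRN stably computes $f$ if for every $\vec{x}$ and every $\vec{C}$ reachable from $\vec{I}_{\vec{x}}$ some stable $\vec{O}$ reachable from $\vec{C}$ has $\vec{O}(Y)=f(\vec{x})$. It is output-oblivious if $Y$ is never a reactant. $f$ is obliviously-computable by a leaderless CRN if a leaderless output-oblivious CRN stably computes it. *)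

(* Defs.v *)
From mathcomp Require Import all_boot.
Set Implicit Arguments. Unset Strict Implicit. Unset Printing Implicit Defensive.

Section CRN.
Variable S : finType.

Definition config := {ffun S -> nat}.

(* a reaction is a pair (R, P) of reactant and product vectors *)
Definition reaction := (config * config)%type.

Definition applicable (r : reaction) (C : config) : Prop :=
  forall s, r.1 s <= C s.

Definition apply_reaction (r : reaction) (C : config) : config :=
  [ffun s => C s - r.1 s + r.2 s].

Definition step (rs : seq reaction) (C D : config) : Prop :=
  exists2 r, r \in rs & applicable r C /\ D = apply_reaction r C.

Inductive reachable (rs : seq reaction) : config -> config -> Prop :=
  | reach_refl C : reachable rs C C
  | reach_step C D E : step rs C D -> reachable rs D E -> reachable rs C E.

Definition stable (rs : seq reaction) (Y : S) (C : config) : Prop :=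
  forall D, reachable rs C D -> D Y = C Y.

Definition init_config (d : nat) (X : 'I_d -> S) (x : 'I_d -> nat) : config :=
  [ffun s => \sum_(i < d | X i == s) x i].

Definition stably_computes (d : nat) (rs : seq reaction) (X : 'I_d -> S) (Y : S)
    (f : ('I_d -> nat) -> nat) : Prop :=
  forall x C, reachable rs (init_config X x) C ->
    exists O, [/\ reachable rs C O, stable rs Y O & O Y = f x].

Definition output_oblivious (rs : seq reaction) (Y : S) : Prop :=
  forall r, r \in rs -> r.1 Y = 0.

End CRN.

Definition obliviously_computable (d : nat) (f : ('I_d -> nat) -> nat) : Prop :=
  exists (S : finType) (rs : seq (reaction S)) (X : 'I_d -> S) (Y : S),
    [/\ injective X, (forall i, X i != Y), output_oblivious rs Y
      & stably_computes rs X Y f].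

(* Main.v *)
Require Import Defs.
From mathcomp Require Import all_boot.
From mathcomp Require Import zify.
Set Implicit Arguments. Unset Strict Implicit.

Section Aux.
Variable S : finType.
Variable rs : seq (reaction S).

Definition addc (C E : config S) : config S := [ffun s => C s + E s].

Lemma reach_trans C D E : reachable rs C D -> reachable rs D E -> reachable rs C E.
Proof.
elim=> [//|C1 D1 E1 st _ IH] H; exact: (reach_step st (IH H)).
Qed.

Lemma reach_add C D E : reachable rs C D -> reachable rs (addc C E) (addc D E).
Proof.
elim=> [C1|C1 D1 E1 [r rin [app ->]] _ IH]; first exact: reach_refl.
apply: (reach_step _ IH); exists r => //; split.
  by move=> s; rewrite ffunE; have := app s; lia.
apply/ffunP=> s; rewrite !ffunE; have := app s; lia.
Qed.

Lemma reach_mono Y C D : output_oblivious rs Y -> reachable rs C D -> C Y <= D Y.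
Proof.
move=> oo; elim=> [//|C1 D1 E1 [r rin [app ->]] _ IH].
apply: leq_trans IH; rewrite ffunE (oo r rin); lia.
Qed.
End Aux.

Lemma init_add (S : finType) d (X : 'I_d -> S) x y :
  init_config X (fun i => x i + y i) = addc (init_config X x) (init_config X y).
Proof. by apply/ffunP=> s; rewrite !ffunE big_split. Qed.

Theorem mainTheorem6 (d : nat) (f : ('I_d -> nat) -> nat) :
  obliviously_computable f ->
  forall x y : 'I_d -> nat, f x + f y <= f (fun i => x i + y i).
Proof.
move=> [S [rs [X [Y [_ _ oo sc]]]]] x y.
have [O1 [r1 _ e1]] := sc x _ (reach_refl _ _).
have [O2 [r2 _ e2]] := sc y _ (reach_refl _ _).
have R : reachable rs (init_config X (fun i => x i + y i)) (addc O1 O2).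
  rewrite init_add; apply: reach_trans (reach_add _ r1) _.
  have := reach_add O1 r2.
  have Hc : forall A B : config S, addc A B = addc B A.
    by move=> A B; apply/ffunP=> s; rewrite !ffunE addnC.
  by rewrite (Hc O1) (Hc O1).
have [O [r3 _ e3]] := sc _ _ R.
rewrite -e3 -e1 -e2.
have := reach_mono oo r3; by rewrite ffunE.
Qed.
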